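(* Let $c>0$ and for integers $d\ge0$ let $\lambda_d=I_d(c)/I_0(c)$. Then $$\frac{9}{2\pi^2}\sum_{\substack{d\ge1\\ d\not\equiv0 \ (\mathrm{mod}\ 3)}}\frac{\lambda_d}{d^2}>\frac{4}{\pi^2}\sum_{\substack{d\ge1\\ d\text{ odd}}}\frac{\lambda_d}{d^2}.$$ Equivalently, for the spherical noise operator $U_g$ on $S^1$ with parameter $c$, a partition of $S^1$ into three arcs of angle $2\pi/3$ has strictly larger value of $\sum_i[\int_{S^1}1_{H_i}U_g1_{H_i}\,d\sigma-\sigma(H_i)^2]$ than a partition into two arcs of angle $\pi$.
   Context: $I_\alpha(x)=\frac{(x/2)^\alpha}{\sqrt\pi\,\Gamma(\alpha+1/2)}\int_{-1}^1e^{xt}(1-t^2)^{\alpha-1/2}\,dt$ is the modified Bessel function of the first kind. In the paper $c=\rho rs/(1-\rho^2)$ with $0<\rho<1$, $r,s>0$. $\sigma$ is normalized Haar measure on $S^1$, $g(t)=e^{ct}/(\frac1\pi\int_0^\pi e^{c\cos\theta}d\theta)$, $U_gu(x)=\int_{S^1}g(\langle x,y\rangle)u(y)\,d\sigma(y)$; $\lambda_d$ are the Fourier multipliers of $U_g$. *)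

(* Defs.v *)
From Stdlib Require Import Reals.
From Coquelicot Require Import Coquelicot.
Open Scope R_scope.

Definition Gamma (s : R) : R :=
  RInt_gen (fun t => Rpower t (s - 1) * exp (- t)) (at_right 0) (Rbar_locally p_infty).

(* Modified Bessel function of the first kind, via the integral representation
   I_a(x) = (x/2)^a / (sqrt pi Gamma(a+1/2)) int_{-1}^{1} e^{xt} (1-t^2)^{a-1/2} dt,
   specialised to nonnegative integer order d and x > 0 (so (x/2)^d is the nat power).
   The integral is improper at t = -1, 1 (needed for d = 0). *)
Definition besselI (d : nat) (x : R) : R :=
  (x / 2) ^ d / (sqrt PI * Gamma (INR d + / 2)) *
  RInt_gen (fun t => exp (x * t) * Rpower (1 - t ^ 2) (INR d - / 2))
           (at_right (-1)) (at_left 1).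

Definition lambda (c : R) (d : nat) : R := besselI d c / besselI 0 c.

(* Main.v *)
Require Import Defs.
From Stdlib Require Import Reals Lra Lia.
From Coquelicot Require Import Coquelicot.
Open Scope R_scope.

Ltac toR := match goal with |- ?a = ?b => change (@eq R a b) end.

Lemma m3 q r : ((6*q + r) mod 3 = r mod 3)%nat.
Proof. replace (6*q+r)%nat with (r + (2*q)*3)%nat by lia. apply Nat.Div0.mod_add. Qed.
Lemma od q r : Nat.odd (6*q + r) = Nat.odd r.
Proof. rewrite Nat.odd_add. replace (6*q)%nat with (2*(3*q))%nat by lia. rewrite Nat.odd_mul. simpl. destruct (Nat.odd r); reflexivity. Qed.
Lemma m6 q r : (r < 6 -> (6*q + r) mod 6 = r)%nat.
Proof. intros. replace (6*q+r)%nat with (r + q*6)%nat by lia. rewrite Nat.Div0.mod_add. apply Nat.mod_small; auto. Qed.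
Lemma dec6 d : exists q r, (d = 6*q + r /\ r < 6)%nat.
Proof. exists (d/6)%nat, (d mod 6)%nat. split. apply Nat.div_mod; lia. apply Nat.mod_upper_bound; lia. Qed.

Definition Aseq (l : nat -> R) d := if orb (Nat.eqb d 0) (Nat.eqb (Nat.modulo d 3) 0) then 0 else l d / INR d ^ 2.
Definition Bseq (l : nat -> R) d := if Nat.odd d then l d / INR d ^ 2 else 0.
Definition Cseq l d := 9/2 * Aseq l d - 4 * Bseq l d.
Definition Pseq l d := if Nat.eqb (d mod 6) 2 then Cseq l d + Cseq l (S d)
  else if Nat.eqb (d mod 6) 3 then 0 else Cseq l d.

Lemma Cchar l q r : (r < 6)%nat -> let d := (6*q+r)%nat in
  Cseq l d = match r with 0%nat => 0 | 1%nat => /2 * (l d / INR d^2)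
   | 2%nat => 9/2 * (l d / INR d^2) | 3%nat => -4 * (l d / INR d^2)
   | 4%nat => 9/2 * (l d / INR d^2) | _ => /2 * (l d / INR d^2) end.
Proof.
  intros Hr d. unfold Cseq, Aseq, Bseq. subst d. rewrite m3, od.
  destruct r as [|[|[|[|[|[|r]]]]]]; try lia; simpl;
  rewrite ?Bool.orb_true_r;
  try (replace (Nat.eqb (6*q+_) 0) with false by (symmetry; apply Nat.eqb_neq; lia));
  simpl; lra.
Qed.

Lemma term_bound (l : nat -> R) d : (forall d, 0 <= l d <= 1) -> (1 <= d)%nat ->
  0 <= l d / INR d ^ 2 <= 6 / (INR (S d) * INR (S (S d))).
Proof.
  intros Hl Hd. assert (H1: 1 <= INR d) by (apply (le_INR 1); auto).
  rewrite !S_INR. destruct (Hl d) as [a b].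
  split. apply Rmult_le_pos; auto. apply Rlt_le, Rinv_0_lt_compat, pow_lt; lra.
  apply Rle_trans with (1 / INR d ^2).
  unfold Rdiv. apply Rmult_le_compat_r; auto. apply Rlt_le, Rinv_0_lt_compat, pow_lt; lra.
  apply (Rmult_le_reg_r (INR d ^ 2 * ((INR d + 1) * (INR d + 1 + 1)))).
  apply Rmult_lt_0_compat. apply pow_lt; lra. nra.
  field_simplify; nra.
Qed.

Lemma tele_series : ex_series (fun n => 6 / (INR (S n) * INR (S (S n)))).
Proof.
  exists 6. unfold is_series.
  assert (E: forall n, sum_n (fun n => 6 / (INR (S n) * INR (S (S n)))) n = 6 - 6 / INR (S (S n))).
  { induction n. rewrite sum_O. simpl. field. rewrite sum_Sn, IHn. change plus with Rplus.
    rewrite !S_INR. assert (0 <= INR n) by apply pos_INR. match goal with |- ?a = ?b => change (@eq R a b) end. field; lra. }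
  apply (filterlim_ext (fun n => 6 - 6 / INR (S (S n)))). intros; rewrite E; auto.
  change (is_lim_seq (fun n => 6 - 6 / INR (S (S n))) 6).
  replace (Finite 6) with (Rbar_minus 6 0) by (simpl; f_equal; ring).
  apply is_lim_seq_minus'. apply is_lim_seq_const.
  replace (Finite 0) with (Rbar_mult 6 0) by (simpl; f_equal; ring).
  unfold Rdiv. apply is_lim_seq_scal_l.
  apply (is_lim_seq_ext (fun n => / INR (n+2))). intros; do 2 f_equal; lia.
  apply (proj1 (is_lim_seq_incr_n (fun n => / INR n) 2 _)).
  replace (Finite 0) with (Rbar_inv p_infty) by reflexivity.
  apply is_lim_seq_inv. apply is_lim_seq_INR. discriminate.
Qed.


Lemma Smod N : ((S N) mod 6 = if Nat.eqb (N mod 6) 5 then 0 else S (N mod 6))%nat.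
Proof.
  destruct (dec6 N) as [q [r [-> Hr]]]. rewrite m6 by auto.
  destruct (Nat.eq_dec r 5) as [->|Hn].
  - rewrite Nat.eqb_refl. replace (S (6*q+5)) with (6*(S q)+0)%nat by lia. apply m6; lia.
  - replace (r =? 5)%nat with false by (symmetry; apply Nat.eqb_neq; auto).
    replace (S (6*q+r)) with (6*q+S r)%nat by lia. apply m6; lia.
Qed.

Lemma sum_rel l N : sum_n (Cseq l) N = sum_n (Pseq l) N - (if Nat.eqb (N mod 6) 2 then Cseq l (S N) else 0).
Proof.
  induction N.
  - rewrite !sum_O. unfold Pseq. simpl. toR. ring.
  - rewrite !sum_Sn, IHN. change plus with Rplus.
    assert (HP: Pseq l (S N) = if (N mod 6 =? 1)%nat then Cseq l (S N) + Cseq l (S (S N)) else if (N mod 6 =? 2)%nat then 0 else Cseq l (S N)).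
    { unfold Pseq. rewrite Smod. destruct (N mod 6)%nat as [|[|[|[|[|[|k]]]]]]; reflexivity. }
    rewrite HP, Smod. destruct (N mod 6)%nat as [|[|[|[|[|[|k]]]]]]; cbn [Nat.eqb]; toR; ring.
Qed.

Lemma divnn a b : 0 <= a -> 0 <= a / b ^ 2.
Proof.
  intros Ha. unfold Rdiv. apply Rmult_le_pos; auto.
  destruct (Req_dec (b^2) 0) as [E|E]. rewrite E, Rinv_0; lra.
  apply Rlt_le, Rinv_0_lt_compat. assert (0 <= b^2) by nra. lra.
Qed.


Lemma Pnn (l : nat -> R) (Hl : forall d, 0 <= l d <= 1) (Hm : forall d, l (S d) <= l d) (H1 : 0 < l 1%nat) d : 0 <= Pseq l d.
Proof.
  destruct (dec6 d) as [q [r [-> Hr]]]. unfold Pseq. rewrite m6 by auto.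
  pose proof (Cchar l q r Hr) as Hc.
  pose proof (divnn (l (6*q+r)%nat) (INR (6*q+r)) (proj1 (Hl _))).
  destruct r as [|[|[|[|[|[|r]]]]]]; try lia; cbv beta iota zeta in Hc; cbn [Nat.eqb]; rewrite ?Hc; try lra.
  replace (S (6*q+2)) with (6*q+3)%nat by lia.
  pose proof (Cchar l q 3 ltac:(lia)) as Hc3. cbv beta iota zeta in Hc3. rewrite Hc3.
  assert (Hd : 1 <= INR (6*q+2)) by (apply (le_INR 1); lia).
  replace (INR (6*q+3)) with (INR (6*q+2) + 1) by (rewrite <- S_INR; f_equal; lia).
  pose proof (Hm (6*q+2)%nat) as Hm2. replace (S (6*q+2)) with (6*q+3)%nat in Hm2 by lia.
  pose proof (Hl (6*q+3)%nat) as [h3 _]. pose proof (Hl (6*q+2)%nat) as [h2 _].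
  set (x := INR (6*q+2)) in *. set (a := l (6*q+2)%nat) in *. set (b := l (6*q+3)%nat) in *.
  assert (b / (x+1)^2 <= a / x^2).
  { apply Rle_trans with (a / (x+1)^2).
    unfold Rdiv; apply Rmult_le_compat_r; auto. apply Rlt_le, Rinv_0_lt_compat; nra.
    unfold Rdiv; apply Rmult_le_compat_l; auto. apply Rinv_le_contravar; nra. }
  assert (0 <= b / (x+1)^2) by (apply divnn; auto).
  lra.
Qed.

Lemma Cneg (l : nat -> R) (Hl : forall d, 0 <= l d <= 1) (Hm : forall d, l (S d) <= l d) (H1 : 0 < l 1%nat) d : (d mod 6 = 3)%nat -> Cseq l d <= 0.
Proof.
  destruct (dec6 d) as [q [r [-> Hr]]]. rewrite m6 by auto. intros ->.
  pose proof (Cchar l q 3 ltac:(lia)) as Hc. cbv beta iota zeta in Hc. rewrite Hc.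
  pose proof (divnn (l (6*q+3)%nat) (INR (6*q+3)) (proj1 (Hl _))). lra.
Qed.

Lemma C1 (l : nat -> R) (Hl : forall d, 0 <= l d <= 1) (Hm : forall d, l (S d) <= l d) (H1 : 0 < l 1%nat) : Cseq l 1 = /2 * l 1%nat.
Proof. pose proof (Cchar l 0 1 ltac:(lia)) as Hc. simpl in Hc. rewrite Hc. simpl. field. Qed.

Lemma Psum (l : nat -> R) (Hl : forall d, 0 <= l d <= 1) (Hm : forall d, l (S d) <= l d) (H1 : 0 < l 1%nat) N : Pseq l 1 <= sum_n (Pseq l) (S N).
Proof.
  induction N.
  - rewrite sum_Sn, sum_O. change plus with Rplus. pose proof (Pnn l Hl Hm H1 0). lra.
  - rewrite sum_Sn. change plus with Rplus. pose proof (Pnn l Hl Hm H1 (S (S N))). lra.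
Qed.

Lemma bndA (l : nat -> R) (Hl : forall d, 0 <= l d <= 1) (Hm : forall d, l (S d) <= l d) (H1 : 0 < l 1%nat) d : Rabs (Aseq l d) <= 6 / (INR (S d) * INR (S (S d))).
Proof.
  destruct d as [|d].
  - unfold Aseq. simpl. rewrite Rabs_R0. lra.
  - pose proof (term_bound l (S d) Hl ltac:(lia)).
    unfold Aseq. destruct (_ || _)%bool. rewrite Rabs_R0; lra. rewrite Rabs_pos_eq; lra.
Qed.

Lemma bndB (l : nat -> R) (Hl : forall d, 0 <= l d <= 1) (Hm : forall d, l (S d) <= l d) (H1 : 0 < l 1%nat) d : Rabs (Bseq l d) <= 6 / (INR (S d) * INR (S (S d))).
Proof.
  destruct d as [|d].
  - unfold Bseq. simpl. rewrite Rabs_R0. lra.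
  - pose proof (term_bound l (S d) Hl ltac:(lia)).
    unfold Bseq. destruct (Nat.odd _). rewrite Rabs_pos_eq; lra. rewrite Rabs_R0; lra.
Qed.

Lemma series_part (l : nat -> R) (Hl : forall d, 0 <= l d <= 1) (Hm : forall d, l (S d) <= l d) (H1 : 0 < l 1%nat) : 9 / (2 * PI ^ 2) * Series (Aseq l) > 4 / PI ^ 2 * Series (Bseq l).
Proof.
  assert (exA : ex_series (Aseq l)) by (apply (ex_series_le (K:=R_AbsRing) (V:=R_CompleteNormedModule) (Aseq l) _ (bndA l Hl Hm H1) tele_series)).
  assert (exB : ex_series (Bseq l)) by (apply (ex_series_le (K:=R_AbsRing) (V:=R_CompleteNormedModule) (Bseq l) _ (bndB l Hl Hm H1) tele_series)).
  assert (exA' : ex_series (fun n => 9/2 * Aseq l n)) by (apply (ex_series_scal_l (9/2) (Aseq l) exA)).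
  assert (exB' : ex_series (fun n => 4 * Bseq l n)) by (apply (ex_series_scal_l 4 (Bseq l) exB)).
  assert (EC : Series (Cseq l) = 9/2 * Series (Aseq l) - 4 * Series (Bseq l)).
  { unfold Cseq. rewrite Series_minus by auto. rewrite !Series_scal_l. auto. }
  assert (exC : ex_series (Cseq l)).
  { exists (Series (Cseq l)). rewrite EC. unfold Cseq.
    rewrite <- !Series_scal_l, <- Series_minus by auto.
    apply (Series_correct (fun n => 9/2 * Aseq l n - 4 * Bseq l n)).
    apply (ex_series_minus _ _ exA' exB'). }
  assert (pos : Pseq l 1 <= Series (Cseq l)).
  { assert (Hle := is_lim_seq_le_loc (fun _ => Pseq l 1) (sum_n (Cseq l)) (Pseq l 1) (Series (Cseq l))).
    simpl in Hle. apply Hle. exists 1%nat. intros n Hn. destruct n as [|n]; [lia|].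
    rewrite sum_rel. pose proof (Psum l Hl Hm H1 n).
    destruct (Nat.eqb (S n mod 6) 2) eqn:E.
    - apply Nat.eqb_eq in E. assert (S (S n) mod 6 = 3)%nat by (rewrite Smod, E; reflexivity).
      pose proof (Cneg l Hl Hm H1 _ H0). lra.
    - lra.
    - apply is_lim_seq_const.
    - apply (Series_correct _ exC). }
  unfold Pseq in pos. simpl in pos. rewrite (C1 l Hl Hm H1) in pos.
  assert (PI2 : 0 < PI ^ 2) by (pose proof PI_RGT_0; nra).
  apply Rlt_gt. apply (Rmult_lt_reg_l (PI^2)); auto.
  replace (PI ^ 2 * (4 / PI ^ 2 * Series (Bseq l))) with (4 * Series (Bseq l)) by (field; pose proof PI_RGT_0; lra).
  replace (PI ^ 2 * (9 / (2 * PI ^ 2) * Series (Aseq l))) with (9/2 * Series (Aseq l)) by (field; pose proof PI_RGT_0; lra).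
  lra.
Qed.

Lemma T1 (Fa Fb : (R->Prop)->Prop) {FFa : Filter Fa} {FFb : Filter Fb} (P : R -> Prop) (F f : R -> R) (la lb : R) :
  (forall x, P x -> locally x P) ->
  filter_prod Fa Fb (fun ab => forall x, Rmin (fst ab) (snd ab) <= x <= Rmax (fst ab) (snd ab) -> P x) ->
  (forall x, P x -> is_derive F x (f x)) ->
  (forall x, P x -> continuous f x) ->
  filterlim F Fa (locally la) -> filterlim F Fb (locally lb) ->
  is_RInt_gen f Fa Fb (lb - la).
Proof.
  intros Hop Hprod Hd Hc Ha Hb.
  apply (is_RInt_gen_ext (Derive F)).
  - eapply filter_imp; [|apply Hprod]; cbv beta. intros ab H x Hx.
    apply is_derive_unique, Hd, H; lra.
  - apply is_RInt_gen_Derive; auto.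
    + eapply filter_imp; [|apply Hprod]; cbv beta. intros ab H x Hx. exists (f x). apply Hd, H; auto.
    + eapply filter_imp; [|apply Hprod]; cbv beta. intros ab H x Hx.
      assert (Px : P x) by (apply H; auto).
      apply (continuous_ext_loc _ f).
      * eapply filter_imp; [|apply (Hop x Px)]; cbv beta. intros y Py. symmetry. apply is_derive_unique, Hd; auto.
      * apply Hc; auto.
Qed.

Lemma ballR (L eps x : R) : Rabs (x - L) < eps -> ball L eps x.
Proof. intros H. unfold ball; simpl. unfold AbsRing_ball, abs, minus, plus, opp; simpl. exact H. Qed.

Lemma T2 (Fb : (R->Prop)->Prop) {FF : Filter Fb} (D : R -> Prop) (F : R -> R) (M y0 : R) :
  D y0 -> (forall x, D x -> F x <= M) -> (forall y, D y -> Fb (fun x => D x /\ F y <= F x)) ->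
  exists L, (forall x, D x -> F x <= L) /\ filterlim F Fb (locally L).
Proof.
  intros Dy0 HM Hmono.
  set (E := fun r => exists x, D x /\ r = F x).
  destruct (completeness E) as [L [HU HL]].
  - exists M. intros r [x [Dx ->]]. auto.
  - exists (F y0). exists y0; auto.
  - exists L. split. intros x Dx. apply HU. exists x; auto.
    apply filterlim_locally. intros eps.
    assert (Hex : exists y, D y /\ L - eps < F y).
    { apply Classical_Prop.NNPP. intros Hn.
      assert (L <= L - eps). { apply HL. intros r [x [Dx ->]].
        apply Rnot_lt_le. intros Hlt. apply Hn. exists x; auto. }
      destruct eps; simpl in *; lra. }
    destruct Hex as [y [Dy Hy]].
    eapply filter_imp; [|apply (Hmono y Dy)]. intros x [Dx Hx].
    apply ballR. assert (F x <= L) by (apply HU; exists x; auto).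
    apply Rabs_def1; lra.
Qed.

Lemma T2' (Fb : (R->Prop)->Prop) {FF : Filter Fb} (D : R -> Prop) (F : R -> R) (m y0 : R) :
  D y0 -> (forall x, D x -> m <= F x) -> (forall y, D y -> Fb (fun x => D x /\ F x <= F y)) ->
  exists L, (forall x, D x -> L <= F x) /\ filterlim F Fb (locally L).
Proof.
  intros Dy0 Hm Hmono.
  destruct (T2 Fb D (fun x => - F x) (-m) y0 Dy0) as [L [HU HL]].
  - intros x Dx. specialize (Hm x Dx). lra.
  - intros y Dy. eapply filter_imp; [|apply (Hmono y Dy)]. intros x [Dx H]. split; auto; lra.
  - exists (-L). split. intros x Dx. specialize (HU x Dx). lra.
    apply (filterlim_ext (fun x => opp (- F x))). intros x. unfold opp; simpl; ring.
    eapply filterlim_comp. apply HL. exact (filterlim_opp (K:=R_AbsRing) (V:=R_NormedModule) L).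
Qed.

Lemma T3 (Fa Fb : (R->Prop)->Prop) {FFa : Filter Fa} {FFb : Filter Fb} (P : R -> Prop) (f : R -> R) (x0 M : R) :
  P x0 ->
  (forall x y z, P x -> P z -> x <= y <= z -> P y) ->
  (forall x, P x -> locally x P) ->
  (forall x, P x -> continuous f x) ->
  (forall x, P x -> 0 <= f x) ->
  (forall y, P y -> y <= x0 -> Fa (fun x => P x /\ x <= y)) ->
  (forall y, P y -> x0 <= y -> Fb (fun x => P x /\ y <= x)) ->
  (forall x, P x -> x0 <= x -> RInt f x0 x <= M) ->
  (forall x, P x -> x <= x0 -> RInt f x x0 <= M) ->
  exists l, is_RInt_gen f Fa Fb l /\ (forall x1, P x1 -> x0 <= x1 -> RInt f x0 x1 <= l).
Proof.
  intros P0 Pint Pop Pc Ppos HFa HFb HM1 HM2.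
  assert (exRI : forall a b, P a -> P b -> ex_RInt f a b).
  { intros a b Pa Pb. apply (ex_RInt_continuous (V:=R_CompleteNormedModule)). intros z Hz. apply Pc.
    destruct (Rle_dec a b). rewrite Rmin_left, Rmax_right in Hz by lra. apply (Pint a z b); auto.
    rewrite Rmin_right, Rmax_left in Hz by lra. apply (Pint b z a); auto. }
  assert (Chas : forall a b, P a -> P b -> RInt f x0 b = RInt f x0 a + RInt f a b).
  { intros a b Pa Pb. symmetry. apply (RInt_Chasles (V:=R_CompleteNormedModule) f x0 a b); auto. }
  set (F := fun x => RInt f x0 x).
  destruct (T2 Fb (fun x => P x /\ x0 <= x) F M x0) as [Lb [HUb Hlb]].
  - split; auto; lra.
  - intros x [Px Hx]. apply HM1; auto.
  - intros y [Py Hy]. eapply filter_imp; [|apply (HFb y Py Hy)]. intros x [Px Hx].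
    split. split; auto; lra. unfold F. rewrite (Chas y x Py Px).
    assert (0 <= RInt f y x); [|lra]. apply RInt_ge_0; auto. intros z Hz; apply Ppos, (Pint y z x); auto; lra.
  - destruct (T2' Fa (fun x => P x /\ x <= x0) F (-M) x0) as [La [HUa Hla]].
    + split; auto; lra.
    + intros x [Px Hx]. unfold F. rewrite <- opp_RInt_swap by auto. specialize (HM2 x Px Hx).
      unfold opp; simpl. lra.
    + intros y [Py Hy]. eapply filter_imp; [|apply (HFa y Py Hy)]. intros x [Px Hx].
      split. split; auto; lra. unfold F. rewrite (Chas x y Px Py).
      assert (0 <= RInt f x y); [|lra]. apply RInt_ge_0; auto. intros z Hz; apply Ppos, (Pint x z y); auto; lra.
    + exists (Lb - La). split.
      * apply (T1 Fa Fb P F f); auto.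
        -- apply (Filter_prod _ _ _ (fun x => P x /\ x <= x0) (fun x => P x /\ x0 <= x)).
           apply (HFa x0 P0); lra. apply (HFb x0 P0); lra.
           intros a b [Pa Ha] [Pb Hb] z Hz. simpl in Hz.
           rewrite Rmin_left, Rmax_right in Hz by lra. apply (Pint a z b); auto.
        -- intros x Px. apply (is_derive_RInt f F x0 x); [|apply Pc; auto].
           eapply filter_imp; [|apply (Pop x Px)]. intros y Py. apply (RInt_correct (V:=R_CompleteNormedModule)), exRI; auto.
      * intros x1 P1 H1. assert (F x1 <= Lb) by (apply HUb; auto).
        assert (La <= F x0) by (apply HUa; split; auto; lra).
        unfold F in *. rewrite RInt_point in H0. unfold zero in H0; simpl in H0. lra.
Qed.


Lemma exd_cont (f : R -> R) x : ex_derive f x -> continuous f x.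
Proof. apply (ex_derive_continuous (K:=R_AbsRing) (V:=R_NormedModule)). Qed.

Definition gf (d:nat) (t:R) := t^d / sqrt t * exp (-t).

Lemma gf_cont d t : 0 < t -> continuous (gf d) t.
Proof. intros Ht. apply exd_cont. unfold gf. auto_derive.
  assert (0 < sqrt t) by (apply sqrt_lt_R0; auto). repeat split; auto; lra. Qed.

Lemma Hder d t : 0 < t -> is_derive (fun t => -(t^d * sqrt t * exp(-t))) t (gf (S d) t - (INR d + /2) * gf d t).
Proof.
  intros Ht. auto_derive; auto. unfold gf.
  assert (Hs: sqrt t * sqrt t = t) by (apply sqrt_sqrt; lra).
  assert (Hp: 0 < sqrt t) by (apply sqrt_lt_R0; auto).
  remember (sqrt t) as s. clear Heqs. set (e := exp (-t)). clearbody e.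
  rewrite <- Hs. destruct d as [|d]; simpl pred; rewrite ?S_INR; simpl INR; cbn [pow]; toR; field; lra.
Qed.

Lemma ball_abs (a e x : R) : ball a e x -> Rabs (x - a) < e.
Proof. intros H. exact H. Qed.

Lemma ar_in a y : a < y -> at_right a (fun x => a < x /\ x <= y).
Proof.
  intros H. assert (Hp : 0 < y - a) by lra. exists (mkposreal _ Hp). simpl.
  intros x Hb Hx. apply ball_abs in Hb. apply Rabs_def2 in Hb. lra.
Qed.

Lemma al_in b y : y < b -> at_left b (fun x => y <= x /\ x < b).
Proof.
  intros H. assert (Hp : 0 < b - y) by lra. exists (mkposreal _ Hp). simpl.
  intros x Hb Hx. apply ball_abs in Hb. apply Rabs_def2 in Hb. lra.
Qed.

Lemma loc_int a b x : a < x < b -> locally x (fun y => a < y < b).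
Proof.
  intros H. assert (Hp : 0 < Rmin (x - a) (b - x)) by (apply Rmin_pos; lra).
  exists (mkposreal _ Hp). simpl. intros y Hb. apply ball_abs in Hb. apply Rabs_def2 in Hb.
  pose proof (Rmin_l (x-a) (b-x)). pose proof (Rmin_r (x-a) (b-x)). lra.
Qed.

Lemma loc_gt a x : a < x -> locally x (fun y => a < y).
Proof.
  intros H. eapply filter_imp; [|apply (loc_int a (x+1) x); lra]. intros y Hy; lra.
Qed.

Lemma cont_right (f : R -> R) a : continuous f a -> filterlim f (at_right a) (locally (f a)).
Proof. intros H. eapply filterlim_filter_le_1; [|apply H]. apply filter_le_within. Qed.
Lemma cont_right' (f : R -> R) a l : continuous f a -> f a = l -> filterlim f (at_right a) (locally l).
Proof. intros H <-. apply cont_right; auto. Qed.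
Lemma cont_left' (f : R -> R) a l : continuous f a -> f a = l -> filterlim f (at_left a) (locally l).
Proof. intros H <-. eapply filterlim_filter_le_1; [|apply H]. apply filter_le_within. Qed.
Lemma cont_left (f : R -> R) a : continuous f a -> filterlim f (at_left a) (locally (f a)).
Proof. intros H. eapply filterlim_filter_le_1; [|apply H]. apply filter_le_within. Qed.

Lemma RInt_by_deriv (F f : R -> R) a b : a <= b ->
  (forall x, a <= x <= b -> is_derive F x (f x)) -> (forall x, a <= x <= b -> continuous f x) ->
  RInt f a b = F b - F a.
Proof.
  intros Hab Hd Hc. apply is_RInt_unique.
  apply (is_RInt_derive (V:=R_CompleteNormedModule)).
  intros x Hx; rewrite Rmin_left, Rmax_right in Hx by lra; auto.
  intros x Hx; rewrite Rmin_left, Rmax_right in Hx by lra; auto.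
Qed.

Lemma exRI (f : R -> R) a b : a <= b -> (forall x, a <= x <= b -> continuous f x) -> ex_RInt f a b.
Proof.
  intros Hab Hc. apply (ex_RInt_continuous (V:=R_CompleteNormedModule)).
  intros x Hx; rewrite Rmin_left, Rmax_right in Hx by lra; auto.
Qed.

Lemma G0 : exists l, is_RInt_gen (gf 0) (at_right 0) (Rbar_locally p_infty) l /\ 0 < l.
Proof.
  destruct (T3 (at_right 0) (Rbar_locally p_infty) (fun x => 0 < x) (gf 0) 1 2) as [l [Hl Hb]].
  - lra.
  - intros; lra.
  - intros x Hx; apply loc_gt; auto.
  - intros x Hx; apply gf_cont; auto.
  - intros x Hx. unfold gf. assert (0 < sqrt x) by (apply sqrt_lt_R0; auto).
    pose proof (exp_pos (-x)). simpl. apply Rmult_le_pos; [|lra]. apply Rlt_le, Rdiv_lt_0_compat; lra.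
  - intros y Hy _. eapply filter_imp; [|apply (ar_in 0 y Hy)]. intros x Hx; lra.
  - intros y Hy _. exists y. intros x Hx. lra.
  - intros x Hx H1.
    assert (RInt (gf 0) 1 x <= RInt (fun t => exp (-t)) 1 x).
    { apply RInt_le; auto. apply exRI; auto. intros z Hz; apply gf_cont; lra.
      apply exRI; auto. intros z Hz; apply exd_cont; auto_derive; auto.
      intros z Hz. unfold gf. simpl. pose proof (exp_pos (-z)).
      assert (1 <= sqrt z) by (rewrite <- sqrt_1; apply sqrt_le_1_alt; lra).
      replace (exp (-z)) with (1 * exp (-z)) at 2 by ring.
      apply Rmult_le_compat_r; [lra|]. unfold Rdiv. rewrite Rmult_1_l.
      rewrite <- Rinv_1. apply Rinv_le_contravar; lra. }
    rewrite (RInt_by_deriv (fun t => - exp (-t)) (fun t => exp (-t))) in H; auto.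
    pose proof (exp_pos (-x)). assert (exp (- (1)) < exp 0) by (apply exp_increasing; lra).
    rewrite exp_0 in H2. lra.
    intros z Hz. auto_derive; auto. ring.
    intros z Hz. apply exd_cont; auto_derive; auto.
  - intros x Hx H1.
    assert (RInt (gf 0) x 1 <= RInt (fun t => / sqrt t) x 1).
    { apply RInt_le; auto. apply exRI; auto. intros z Hz; apply gf_cont; lra.
      apply exRI; auto. intros z Hz; apply exd_cont; auto_derive.
      assert (0 < sqrt z) by (apply sqrt_lt_R0; lra). split; lra.
      intros z Hz. unfold gf. simpl. assert (0 < sqrt z) by (apply sqrt_lt_R0; lra).
      assert (exp (-z) <= exp 0) by (apply exp_le_3 || (apply Rlt_le, exp_increasing; lra)).
      rewrite exp_0 in H0. unfold Rdiv. rewrite Rmult_1_l.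
      pose proof (Rinv_0_lt_compat _ H). nra. }
    rewrite (RInt_by_deriv (fun t => 2 * sqrt t) (fun t => / sqrt t)) in H; auto.
    rewrite sqrt_1 in H. assert (0 <= sqrt x) by apply sqrt_pos. lra.
    intros z Hz. assert (0 < sqrt z) by (apply sqrt_lt_R0; lra). auto_derive; [lra|]. field. lra.
    intros z Hz. apply exd_cont; auto_derive.
      assert (0 < sqrt z) by (apply sqrt_lt_R0; lra). split; lra.
  - exists l. split; auto.
    apply Rlt_le_trans with (RInt (gf 0) 1 2); [|apply Hb; lra].
    apply RInt_gt_0; [lra| |].
    intros x Hx. unfold gf. assert (0 < sqrt x) by (apply sqrt_lt_R0; lra).
    pose proof (exp_pos (-x)). simpl. apply Rmult_lt_0_compat; auto. apply Rdiv_lt_0_compat; lra.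
    intros x Hx; apply gf_cont; lra.
Qed.

Lemma cmul (f g : R -> R) x : continuous f x -> continuous g x -> continuous (fun y => f y * g y) x.
Proof. apply (continuous_mult (K:=R_AbsRing)). Qed.
Lemma cplus (f g : R -> R) x : continuous f x -> continuous g x -> continuous (fun y => f y + g y) x.
Proof. apply (continuous_plus (K:=R_AbsRing) (V:=R_NormedModule)). Qed.
Lemma copp (f : R -> R) x : continuous f x -> continuous (fun y => - f y) x.
Proof. apply (continuous_opp (K:=R_AbsRing) (V:=R_NormedModule)). Qed.
Lemma cminus (f g : R -> R) x : continuous f x -> continuous g x -> continuous (fun y => f y - g y) x.
Proof. intros. apply cplus; auto. apply copp; auto. Qed.
Lemma cpow (f : R -> R) n x : continuous f x -> continuous (fun y => f y ^ n) x.
Proof. intros H. induction n; simpl. apply continuous_const. apply cmul; auto. Qed.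
Lemma cid x : continuous (fun y : R => y) x.
Proof. apply continuous_id. Qed.
Lemma cconst (c : R) x : continuous (fun _ : R => c) x.
Proof. apply continuous_const. Qed.

Ltac ccont := repeat first [ apply cmul | apply cplus | apply cminus | apply copp | apply cpow
  | apply continuous_sqrt_comp | apply continuous_exp_comp | apply cid | apply cconst ].

Lemma lim_inf s : is_lim (fun t => exp (s * ln t - t)) p_infty 0.
Proof.
  eapply is_lim_comp. apply is_lim_exp_m.
  2: { exists 0. intros; discriminate. }
  apply (is_lim_ext_loc (fun t => t * (s * (ln t / t) - 1))).
  { exists 0. intros t Ht. field. lra. }
  replace m_infty with (Rbar_mult p_infty (s * 0 - 1)).
  apply is_lim_mult. apply is_lim_id.
  apply (is_lim_minus' _ _ _ (Finite (s*0)) (Finite 1)). apply (is_lim_scal_l _ s _ (Finite 0)). apply is_lim_div_ln_p.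
  apply is_lim_const.
  simpl. replace (s*0-1) with (-1) by ring. lra.
  simpl. replace (s*0-1) with (-1) by ring. destruct Rle_dec as [h|h]; [exfalso; lra|]. reflexivity.
Qed.

Lemma Hlim_inf d : filterlim (fun t => -(t^d * sqrt t * exp(-t))) (Rbar_locally p_infty) (locally 0).
Proof.
  assert (L : is_lim (fun t => - exp ((INR d + /2) * ln t - t)) p_infty 0).
  { replace (Finite 0) with (Rbar_opp 0) by (simpl; f_equal; ring). apply is_lim_opp. apply lim_inf. }
  assert (L2 : is_lim (fun t => -(t^d * sqrt t * exp(-t))) p_infty 0).
  { apply (is_lim_ext_loc (fun t => - exp ((INR d + /2) * ln t - t))); auto.
    exists 0. intros t Ht. f_equal.
    rewrite <- Rpower_pow, <- Rpower_sqrt by lra. unfold Rpower.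
    rewrite <- !exp_plus. f_equal. ring. }
  exact L2.
Qed.

Lemma Gstep d l : is_RInt_gen (gf d) (at_right 0) (Rbar_locally p_infty) l ->
  is_RInt_gen (gf (S d)) (at_right 0) (Rbar_locally p_infty) ((INR d + /2) * l).
Proof.
  intros Hl.
  assert (H1 : is_RInt_gen (fun t => gf (S d) t - (INR d + /2) * gf d t) (at_right 0) (Rbar_locally p_infty) (0 - 0)).
  { apply (T1 _ _ (fun x => 0 < x) (fun t => -(t^d * sqrt t * exp(-t)))).
    - intros x Hx; apply loc_gt; auto.
    - apply (Filter_prod _ _ _ (fun x => 0 < x /\ x <= 1) (fun x => 1 <= x)).
      apply ar_in; lra. exists 1; intros; lra.
      intros a b Ha Hb z Hz. simpl in Hz. rewrite Rmin_left in Hz by lra. lra.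
    - intros x Hx. apply Hder; auto.
    - intros x Hx. apply exd_cont. unfold gf. auto_derive.
      assert (0 < sqrt x) by (apply sqrt_lt_R0; auto). repeat split; lra.
    - apply cont_right'. ccont. rewrite sqrt_0; ring.
    - apply Hlim_inf. }
  apply (is_RInt_gen_scal _ (INR d + /2)) in Hl.
  pose proof (is_RInt_gen_plus _ _ _ _ H1 Hl) as H2.
  replace ((INR d + /2) * l) with (plus (0 - 0) (scal (INR d + /2) l))
    by (unfold plus, scal; simpl; unfold mult; simpl; ring).
  eapply is_RInt_gen_ext; [|apply H2].
  apply filter_forall. intros ab x _. unfold plus, scal; simpl; unfold mult; simpl. ring.
Qed.

Lemma Gall d : exists l, is_RInt_gen (gf d) (at_right 0) (Rbar_locally p_infty) l /\ 0 < l.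
Proof.
  induction d.
  - apply G0.
  - destruct IHd as [l [Hl Hp]]. exists ((INR d + /2) * l). split. apply Gstep; auto.
    apply Rmult_lt_0_compat; auto. pose proof (pos_INR d). lra.
Qed.


Definition wf (c : R) (d : nat) (t : R) := exp (c*t) * ((1 - t^2)^d / sqrt (1 - t^2)).

Lemma pow_le1 u n : 0 <= u <= 1 -> u ^ n <= 1.
Proof. intros H. induction n; simpl. lra. pose proof (pow_le u n (proj1 H)). nra. Qed.

Lemma wf_cont c d t : -1 < t < 1 -> continuous (wf c d) t.
Proof. intros Ht. apply exd_cont. unfold wf. auto_derive.
  assert (0 < 1 - t^2) by nra. assert (0 < sqrt (1 - t^2)) by (apply sqrt_lt_R0; nra).
  replace (1 + - (t*(t*1))) with (1 - t^2) by ring. repeat split; lra. Qed.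

Lemma wf_pos c d t : -1 < t < 1 -> 0 < wf c d t.
Proof. intros Ht. unfold wf. assert (0 < 1 - t^2) by nra.
  apply Rmult_lt_0_compat. apply exp_pos. apply Rdiv_lt_0_compat. apply pow_lt; auto. apply sqrt_lt_R0; auto. Qed.

Lemma prodJ : filter_prod (at_right (-1)) (at_left 1)
  (fun ab => forall x, Rmin (fst ab) (snd ab) <= x <= Rmax (fst ab) (snd ab) -> -1 < x < 1).
Proof.
  apply (Filter_prod _ _ _ (fun x => -1 < x /\ x <= 0) (fun x => 0 <= x /\ x < 1)).
  apply ar_in; lra. apply al_in; lra.
  intros a b Ha Hb z Hz. simpl in Hz. rewrite Rmin_left, Rmax_right in Hz by lra. lra.
Qed.

Lemma Jex c d : 0 < c -> exists l, is_RInt_gen (wf c d) (at_right (-1)) (at_left 1) l /\ 0 < l.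
Proof.
  intros Hc.
  destruct (T3 (at_right (-1)) (at_left 1) (fun x => -1 < x < 1) (wf c d) 0 (2 * exp c)) as [l [Hl Hb]].
  - lra.
  - intros; lra.
  - intros x Hx; apply loc_int; auto.
  - intros x Hx; apply wf_cont; auto.
  - intros x Hx; apply Rlt_le, wf_pos; auto.
  - intros y Hy H0. eapply filter_imp; [|apply (ar_in (-1) y); lra]. intros x Hx; lra.
  - intros y Hy H0. eapply filter_imp; [|apply (al_in 1 y); lra]. intros x Hx; lra.
  - intros x Hx H0.
    assert (RInt (wf c d) 0 x <= RInt (fun t => exp c / sqrt (1 - t)) 0 x).
    { apply RInt_le; auto. apply exRI; auto. intros z Hz; apply wf_cont; lra.
      apply exRI; auto. intros z Hz; apply exd_cont; auto_derive.
      assert (0 < sqrt (1 - z)) by (apply sqrt_lt_R0; lra). try replace (1 + - z) with (1 - z) by ring. split; lra.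
      intros z Hz. unfold wf. assert (0 < 1 - z^2) by nra.
      assert (0 < sqrt (1 - z^2)) by (apply sqrt_lt_R0; lra).
      assert (sqrt (1 - z) <= sqrt (1 - z^2)) by (apply sqrt_le_1_alt; nra).
      assert (0 < sqrt (1 - z)) by (apply sqrt_lt_R0; lra).
      assert (exp (c*z) <= exp c) by (apply Rlt_le, exp_increasing; nra).
      assert (Hp: (1 - z^2)^d <= 1) by (apply pow_le1; nra).
      pose proof (pow_le (1 - z^2) d ltac:(lra)). pose proof (exp_pos (c*z)).
      unfold Rdiv. apply Rle_trans with (exp c * / sqrt (1 - z^2)).
      apply Rmult_le_compat; try lra. apply Rmult_le_pos; [lra|]. apply Rlt_le, Rinv_0_lt_compat; lra.
      replace (/ sqrt (1 - z^2)) with (1 * / sqrt (1 - z^2)) at 2 by ring.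
      apply Rmult_le_compat_r; auto. apply Rlt_le, Rinv_0_lt_compat; lra.
      apply Rmult_le_compat_l. pose proof (exp_pos c); lra. apply Rinv_le_contravar; lra. }
    rewrite (RInt_by_deriv (fun t => - 2 * exp c * sqrt (1 - t)) (fun t => exp c / sqrt (1 - t))) in H; auto.
    rewrite Rminus_0_r, sqrt_1 in H. assert (0 <= sqrt (1 - x)) by apply sqrt_pos. pose proof (exp_pos c). nra.
    intros z Hz. assert (0 < sqrt (1 - z)) by (apply sqrt_lt_R0; lra). auto_derive; [lra|]. replace (1 + - z) with (1 - z) by ring. toR. field. lra.
    intros z Hz. apply exd_cont; auto_derive.
      assert (0 < sqrt (1 - z)) by (apply sqrt_lt_R0; lra). try replace (1 + - z) with (1 - z) by ring. split; lra.
  - intros x Hx H0.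
    assert (RInt (wf c d) x 0 <= RInt (fun t => exp c / sqrt (1 + t)) x 0).
    { apply RInt_le; auto. apply exRI; auto. intros z Hz; apply wf_cont; lra.
      apply exRI; auto. intros z Hz; apply exd_cont; auto_derive.
      assert (0 < sqrt (1 + z)) by (apply sqrt_lt_R0; lra). split; lra.
      intros z Hz. unfold wf. assert (0 < 1 - z^2) by nra.
      assert (0 < sqrt (1 - z^2)) by (apply sqrt_lt_R0; lra).
      assert (sqrt (1 + z) <= sqrt (1 - z^2)) by (apply sqrt_le_1_alt; nra).
      assert (0 < sqrt (1 + z)) by (apply sqrt_lt_R0; lra).
      assert (exp (c*z) <= exp c) by (apply Rlt_le, exp_increasing; nra).
      assert (Hp: (1 - z^2)^d <= 1) by (apply pow_le1; nra).
      pose proof (pow_le (1 - z^2) d ltac:(lra)). pose proof (exp_pos (c*z)).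
      unfold Rdiv. apply Rle_trans with (exp c * / sqrt (1 - z^2)).
      apply Rmult_le_compat; try lra. apply Rmult_le_pos; [lra|]. apply Rlt_le, Rinv_0_lt_compat; lra.
      replace (/ sqrt (1 - z^2)) with (1 * / sqrt (1 - z^2)) at 2 by ring.
      apply Rmult_le_compat_r; auto. apply Rlt_le, Rinv_0_lt_compat; lra.
      apply Rmult_le_compat_l. pose proof (exp_pos c); lra. apply Rinv_le_contravar; lra. }
    rewrite (RInt_by_deriv (fun t => 2 * exp c * sqrt (1 + t)) (fun t => exp c / sqrt (1 + t))) in H; auto.
    rewrite Rplus_0_r, sqrt_1 in H. assert (0 <= sqrt (1 + x)) by apply sqrt_pos. pose proof (exp_pos c). nra.
    intros z Hz. assert (0 < sqrt (1 + z)) by (apply sqrt_lt_R0; lra). auto_derive; [lra|]. toR. field. lra.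
    intros z Hz. apply exd_cont; auto_derive.
      assert (0 < sqrt (1 + z)) by (apply sqrt_lt_R0; lra). split; lra.
  - exists l. split; auto.
    apply Rlt_le_trans with (RInt (wf c d) 0 (/2)); [|apply Hb; lra].
    apply RInt_gt_0; [lra| |].
    intros x Hx. apply wf_pos; lra.
    intros x Hx; apply wf_cont; lra.
Qed.

Lemma Eder c d t : -1 < t < 1 -> is_derive (fun t => exp (c*t) * ((1 - t^2)^d * sqrt (1 - t^2))) t
  (c * wf c (S d) t - (2 * INR d + 1) * (t * wf c d t)).
Proof.
  intros Ht. assert (Hu : 0 < 1 - t^2) by nra.
  auto_derive. replace (1 + - (t*(t*1))) with (1 - t^2) by ring. lra.
  replace (1 + - (t*(t*1))) with (1 - t^2) by ring. unfold wf.
  assert (Hs : sqrt (1 - t^2) * sqrt (1 - t^2) = 1 - t^2) by (apply sqrt_sqrt; lra).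
  assert (Hp : 0 < sqrt (1 - t^2)) by (apply sqrt_lt_R0; lra).
  set (u := 1 - t^2) in *. clearbody u. remember (sqrt u) as s. clear Heqs.
  set (e := exp (c*t)). clearbody e. rewrite <- Hs.
  destruct d as [|d]; simpl pred; rewrite ?S_INR; simpl INR; cbn [pow]; toR; field; lra.
Qed.

Lemma Jrec c d (J0 J1 : R) : 0 < c ->
  is_RInt_gen (wf c d) (at_right (-1)) (at_left 1) J0 ->
  is_RInt_gen (wf c (S d)) (at_right (-1)) (at_left 1) J1 ->
  c * J1 <= (2 * INR d + 1) * J0.
Proof.
  intros Hc H0 H1.
  assert (HE : is_RInt_gen (fun t => c * wf c (S d) t - (2 * INR d + 1) * (t * wf c d t)) (at_right (-1)) (at_left 1) (0 - 0)).
  { apply (T1 _ _ (fun x => -1 < x < 1) (fun t => exp (c*t) * ((1 - t^2)^d * sqrt (1 - t^2)))).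
    - intros x Hx; apply loc_int; auto.
    - apply prodJ.
    - intros x Hx; apply Eder; auto.
    - intros x Hx. apply cminus. apply cmul. apply cconst. apply wf_cont; auto.
      apply cmul. apply cconst. apply cmul. apply cid. apply wf_cont; auto.
    - apply cont_right'. apply cmul. apply continuous_exp_comp. apply cmul. apply cconst. apply cid.
      apply cmul. apply cpow. apply cminus. apply cconst. apply cpow. apply cid.
      apply continuous_sqrt_comp. apply cminus. apply cconst. apply cpow. apply cid.
      replace (1 - (-1)^2) with 0 by ring. rewrite sqrt_0. ring.
    - apply cont_left'. apply cmul. apply continuous_exp_comp. apply cmul. apply cconst. apply cid.
      apply cmul. apply cpow. apply cminus. apply cconst. apply cpow. apply cid.
      apply continuous_sqrt_comp. apply cminus. apply cconst. apply cpow. apply cid.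
      replace (1 - 1^2) with 0 by ring. rewrite sqrt_0. ring. }
  set (k := 2 * INR d + 1).
  assert (Hk : 0 < k) by (unfold k; pose proof (pos_INR d); lra).
  assert (HK : is_RInt_gen (fun t => t * wf c d t) (at_right (-1)) (at_left 1) (/k * (c * J1))).
  { apply (is_RInt_gen_scal _ c) in H1.
    pose proof (is_RInt_gen_minus _ _ _ _ H1 HE) as H2.
    apply (is_RInt_gen_scal _ (/k)) in H2.
    replace (/k * (c * J1)) with (scal (/k) (minus (scal c J1) (0 - 0)))
      by (unfold minus, plus, opp, scal; simpl; unfold mult; simpl; ring).
    eapply is_RInt_gen_ext; [|apply H2].
    apply filter_forall. intros ab x _. unfold minus, plus, opp, scal; simpl; unfold mult; simpl.
    fold k. field. lra. }
  assert (Hn := RInt_gen_norm (V:=R_CompleteNormedModule) (Fa:=at_right (-1)) (Fb:=at_left 1)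
     (fun t => t * wf c d t) (wf c d) (/k * (c * J1)) J0).
  assert (Hle : norm (/k * (c * J1)) <= J0).
  { apply Hn; auto.
    - apply (Filter_prod _ _ _ (fun x => -1 < x /\ x <= 0) (fun x => 0 <= x /\ x < 1)).
      apply ar_in; lra. apply al_in; lra. intros a b Ha Hb. simpl. lra.
    - apply (Filter_prod _ _ _ (fun x => -1 < x /\ x <= 0) (fun x => 0 <= x /\ x < 1)).
      apply ar_in; lra. apply al_in; lra. intros a b Ha Hb z Hz. simpl in Hz.
      assert (0 < wf c d z) by (apply wf_pos; lra).
      change (norm (z * wf c d z)) with (Rabs (z * wf c d z)).
      rewrite Rabs_mult, (Rabs_pos_eq (wf c d z)) by lra.
      assert (Rabs z <= 1) by (apply Rabs_le; lra). nra. }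
  change (norm (/k * (c * J1))) with (Rabs (/k * (c * J1))) in Hle.
  pose proof (Rle_abs (/k * (c * J1))).
  apply (Rmult_le_reg_l (/k)). apply Rinv_0_lt_compat; auto.
  replace (/k * (k * J0)) with J0 by (field; lra). lra.
Qed.

Lemma Rpow_half u d : 0 < u -> Rpower u (INR d - /2) = u^d / sqrt u.
Proof.
  intros Hu. replace (INR d - /2) with (INR d + - (/2)) by ring.
  rewrite Rpower_plus, Rpower_Ropp, Rpower_pow, Rpower_sqrt by auto. reflexivity.
Qed.

Lemma Gam d (l : R) : is_RInt_gen (gf d) (at_right 0) (Rbar_locally p_infty) l -> Gamma (INR d + /2) = l.
Proof.
  intros H. unfold Gamma. apply is_RInt_gen_unique.
  eapply is_RInt_gen_ext; [|apply H].
  apply (Filter_prod _ _ _ (fun x => 0 < x /\ x <= 1) (fun x => 1 <= x)).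
  apply ar_in; lra. exists 1; intros; lra.
  intros a b Ha Hb z Hz. simpl in Hz. rewrite Rmin_left in Hz by lra.
  unfold gf. assert (E: INR d + /2 - 1 = INR d - /2) by lra. rewrite E. rewrite Rpow_half by lra. reflexivity.
Qed.

Lemma Jv c d (l : R) : is_RInt_gen (wf c d) (at_right (-1)) (at_left 1) l ->
  RInt_gen (fun t => exp (c * t) * Rpower (1 - t ^ 2) (INR d - / 2)) (at_right (-1)) (at_left 1) = l.
Proof.
  intros H. apply is_RInt_gen_unique.
  eapply is_RInt_gen_ext; [|apply H].
  eapply filter_imp; [|apply prodJ]. intros ab Hab z Hz.
  assert (-1 < z < 1) by (apply Hab; lra).
  unfold wf. rewrite Rpow_half by nra. reflexivity.
Qed.

Lemma bessel_form c d : 0 < c -> exists G J G1 J1,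
  besselI d c = (c/2)^d / (sqrt PI * G) * J /\ besselI (S d) c = (c/2)^(S d) / (sqrt PI * G1) * J1
  /\ 0 < G /\ 0 < J /\ G1 = (INR d + /2) * G /\ c * J1 <= (2 * INR d + 1) * J /\ 0 < J1.
Proof.
  intros Hc.
  destruct (Gall d) as [G [HG HGp]].
  destruct (Jex c d Hc) as [J [HJ HJp]].
  destruct (Jex c (S d) Hc) as [J1 [HJ1 HJ1p]].
  exists G, J, ((INR d + /2) * G), J1.
  unfold besselI. rewrite (Gam d G HG), (Gam (S d) _ (Gstep d G HG)), (Jv c d J HJ), (Jv c (S d) J1 HJ1).
  repeat split; auto. apply (Jrec c d J J1); auto.
Qed.

Lemma bessel_pos c d : 0 < c -> 0 < besselI d c.
Proof.
  intros Hc. destruct (bessel_form c d Hc) as [G [J [G1 [J1 [E1 [E2 [H1 [H2 _]]]]]]]].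
  rewrite E1. assert (0 < sqrt PI) by (apply sqrt_lt_R0, PI_RGT_0).
  apply Rmult_lt_0_compat; auto. apply Rdiv_lt_0_compat. apply pow_lt; lra. apply Rmult_lt_0_compat; auto.
Qed.

Lemma bessel_dec c d : 0 < c -> besselI (S d) c <= besselI d c.
Proof.
  intros Hc. destruct (bessel_form c d Hc) as [G [J [G1 [J1 [E1 [E2 [H1 [H2 [H3 [H4 H5]]]]]]]]]].
  rewrite E1, E2, H3. assert (0 < sqrt PI) by (apply sqrt_lt_R0, PI_RGT_0).
  pose proof (pos_INR d).
  set (A := (c/2)^d / (sqrt PI * G)).
  assert (HA : 0 < A) by (apply Rdiv_lt_0_compat; [apply pow_lt; lra| nra]).
  replace ((c/2)^(S d) / (sqrt PI * ((INR d + /2) * G)) * J1) with (A * (c * J1 / (2 * INR d + 1)))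
    by (unfold A; simpl; field; repeat split; lra).
  apply Rmult_le_compat_l; [lra|].
  apply (Rmult_le_reg_r (2 * INR d + 1)); [lra|].
  replace (c * J1 / (2 * INR d + 1) * (2 * INR d + 1)) with (c * J1) by (field; lra). lra.
Qed.

Theorem mainTheorem13 (c : R) (hc : 0 < c) :
  9 / (2 * PI ^ 2) *
    Series (fun d => if orb (Nat.eqb d 0) (Nat.eqb (Nat.modulo d 3) 0) then 0
                     else lambda c d / INR d ^ 2)
  >
  4 / PI ^ 2 *
    Series (fun d => if Nat.odd d then lambda c d / INR d ^ 2 else 0).
Proof.
  assert (P0 : 0 < besselI 0 c) by (apply bessel_pos; auto).
  assert (Hdec : forall d, lambda c (S d) <= lambda c d).
  { intros d. unfold lambda, Rdiv. apply Rmult_le_compat_r. apply Rlt_le, Rinv_0_lt_compat; auto.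
    apply bessel_dec; auto. }
  assert (Hpos : forall d, 0 < lambda c d).
  { intros d. unfold lambda. apply Rdiv_lt_0_compat; auto. apply bessel_pos; auto. }
  assert (Hle1 : forall d, lambda c d <= 1).
  { induction d. unfold lambda. right. field. lra. pose proof (Hdec d). lra. }
  apply (series_part (lambda c)).
  - intros d. split; [apply Rlt_le|]; auto.
  - auto.
  - auto.
Qed.
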